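(* Let $\varphi=\frac{1+\sqrt5}{2}$, $F_n=\frac{\varphi^n-(-1/\varphi)^n}{\varphi+1/\varphi}$, $F_0!=1$, $F_n!=F_1\cdots F_n$. Define $$e_F^x=\sum_{n=0}^\infty\frac{x^n}{F_n!},\qquad E_F^x=\sum_{n=0}^\infty(-1)^{\frac{n(n-1)}2}\frac{x^n}{F_n!}.$$ Then both series define entire functions of $x$, and for every constant $k$ and every $x\ne0$, $$D_Fe_F^{kx}=k\,e_F^{kx},\qquad D_FE_F^{kx}=k\,E_F^{-kx},$$ where $D_Ff(x)=\frac{f(\varphi x)-f(-x/\varphi)}{(\varphi+\frac1\varphi)x}$.
   Context: $D_F$ is the Golden derivative; $e_F^{kx}$ means $e_F^{y}$ evaluated at $y=kx$, and similarly for $E_F$. *)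

(* Defs.v *)
From Stdlib Require Import Reals.
From Coquelicot Require Import Coquelicot.
Open Scope R_scope.

Definition phi : R := (1 + sqrt 5) / 2.

Definition Fib (n : nat) : R := (phi ^ n - (- / phi) ^ n) / (phi + / phi).

Fixpoint Fibfact (n : nat) : R :=
  match n with
  | O => 1
  | S m => Fibfact m * Fib (S m)
  end.

Definition eF_coef (n : nat) : C := RtoC (/ Fibfact n).
Definition EF_coef (n : nat) : C :=
  RtoC ((-1) ^ (n * (n - 1) / 2) / Fibfact n).

Definition DF (f : C -> C) (x : C) : C :=
  ((f (RtoC phi * x) - f (- x / RtoC phi)) / ((RtoC phi + / RtoC phi) * x))%C.

(* Main.v *)
Require Import Defs.
From Stdlib Require Import Reals Lra Lia ClassicalEpsilon.
From Coquelicot Require Import Coquelicot.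
Open Scope R_scope.

Lemma sqrt5_sq : sqrt 5 * sqrt 5 = 5.
Proof. apply sqrt_sqrt; lra. Qed.
Lemma sqrt5_pos : 0 < sqrt 5.
Proof. apply sqrt_lt_R0; lra. Qed.
Lemma phi_pos : 0 < phi.
Proof. unfold phi; pose proof sqrt5_pos; lra. Qed.
Lemma phi_sq : phi * phi = phi + 1.
Proof. unfold phi; pose proof sqrt5_sq; nra. Qed.
Lemma phi_plus_inv_pos : 0 < phi + / phi.
Proof. pose proof phi_pos; pose proof (Rinv_0_lt_compat _ phi_pos); lra. Qed.

Lemma Fib_rec n : Fib (S (S n)) = Fib (S n) + Fib n.
Proof.
  unfold Fib. pose proof phi_pos. pose proof phi_plus_inv_pos.
  assert (H1 : phi ^ S (S n) = phi ^ S n + phi ^ n).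
  { simpl. replace (phi * (phi * phi ^ n)) with ((phi*phi) * phi ^ n) by ring.
    rewrite phi_sq; ring. }
  assert (H2 : (- / phi) ^ S (S n) = (- / phi) ^ S n + (- / phi) ^ n).
  { simpl. assert (E : (- / phi) * (- / phi) = - / phi + 1).
    { assert (Hi : / phi = phi - 1).
      { pose proof phi_sq. field_simplify; [|lra]. apply Rmult_eq_reg_r with phi; [|lra].
        unfold Rdiv. rewrite Rmult_assoc, Rinv_l by lra. nra. }
      rewrite Hi. pose proof phi_sq. ring_simplify. lra. }
    replace (- / phi * (- / phi * (- / phi) ^ n)) with ((- / phi * - / phi) * (- / phi) ^ n) by ring.
    rewrite E; ring. }
  rewrite H1, H2. field. split; nra.
Qed.

Lemma Fib0 : Fib 0 = 0.
Proof. unfold Fib; simpl. unfold Rdiv. ring. Qed.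
Lemma Fib1 : Fib 1 = 1.
Proof. unfold Fib; simpl. pose proof phi_plus_inv_pos. pose proof phi_pos. field. split; nra. Qed.

Lemma Fib_bound n : 1 <= Fib (S n) /\ INR n / 2 <= Fib (S n) /\
                    1 <= Fib (S (S n)) /\ INR (S n) / 2 <= Fib (S (S n)).
Proof.
  induction n as [|n IH].
  - rewrite Fib_rec, Fib1, Fib0. simpl. lra.
  - destruct IH as [A [B [C D]]]. repeat split; try lra.
    rewrite Fib_rec. rewrite !S_INR in *. lra.
    rewrite Fib_rec. rewrite !S_INR in *. lra.
Qed.

Lemma Fib_S_ge1 n : 1 <= Fib (S n).
Proof. apply Fib_bound. Qed.

Lemma Fibfact_pos n : 0 < Fibfact n.
Proof. induction n; simpl. lra. pose proof (Fib_S_ge1 n). nra. Qed.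

Definition bb (n : nat) : R := / Fibfact n.

Lemma bb_pos n : 0 < bb n.
Proof. apply Rinv_0_lt_compat, Fibfact_pos. Qed.

Lemma bb_dec n : bb (S n) <= bb n.
Proof.
  unfold bb; simpl. pose proof (Fib_S_ge1 n). pose proof (Fibfact_pos n).
  apply Rinv_le_contravar; nra.
Qed.

Lemma bb_radius : CV_radius bb = p_infty.
Proof.
  apply CV_radius_infinite_DAlembert.
  - intro n; pose proof (bb_pos n); lra.
  - apply is_lim_seq_le_le with (u := fun _ => 0) (w := fun n => 4 * / INR (S n)).
    + intro n. unfold bb; cbn [Fibfact]. pose proof (Fib_bound n) as [A [B _]].
      pose proof (Fibfact_pos n).
      replace (/ (Fibfact n * Fib (S n)) / / Fibfact n) with (/ Fib (S n)) by (field; lra).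
      rewrite Rabs_pos_eq by (apply Rlt_le, Rinv_0_lt_compat; lra).
      split. apply Rlt_le, Rinv_0_lt_compat; lra.
      pose proof (pos_INR n).
      apply Rle_trans with (/ ((INR n + 1)/4)).
      apply Rinv_le_contravar; lra.
      rewrite S_INR; right; field; lra.
    + apply is_lim_seq_const.
    + replace (Finite 0) with (Rbar_mult 4 0) by (simpl; f_equal; ring).
      apply is_lim_seq_scal_l.
      replace (Finite 0) with (Rbar_inv p_infty) by reflexivity.
      apply is_lim_seq_inv; [|discriminate].
      apply (is_lim_seq_incr_1 INR p_infty). apply is_lim_seq_INR.
Qed.

Lemma bb_series r : ex_series (fun n => bb n * r ^ n).
Proof.
  assert (H : ex_pseries bb r).
  { apply CV_radius_inside. rewrite bb_radius. exact I. }
  destruct H as [l Hl]. exists l. apply is_pseries_R. exact Hl.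
Qed.

Lemma INR_le_2pow n : INR n <= 2 ^ n.
Proof.
  induction n. simpl; lra. rewrite S_INR. simpl.
  assert (1 <= 2 ^ n) by (apply pow_R1_Rle; lra). lra.
Qed.

Lemma pow_mono_S R n : 1 <= R -> R ^ n <= R ^ S n.
Proof. intros H. simpl. assert (0 <= R ^ n) by (apply pow_le; lra). nra. Qed.

Lemma pow_pred_le R n : 1 <= R -> R ^ pred n <= R ^ n.
Proof. intros H; destruct n. simpl; lra. apply pow_mono_S; auto. Qed.

Lemma series_norm_le (u : nat -> C) (v : nat -> R) lu lv :
  @is_series C_AbsRing C_NormedModule u lu -> is_series v lv ->
  (forall n, Cmod (u n) <= v n) -> Cmod lu <= lv.
Proof.
  intros Hu Hv Hle.
  assert (Hs : forall n, norm (sum_n u n) <= sum_n v n).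
  { induction n.
    - rewrite !sum_O. change (Cmod (u 0%nat) <= v 0%nat). apply Hle.
    - rewrite !sum_Sn.
      change (Cmod (Cplus (sum_n u n) (u (S n))) <= sum_n v n + v (S n)).
      eapply Rle_trans. apply Cmod_triangle.
      change (norm (sum_n u n)) with (Cmod (sum_n u n)) in IHn. specialize (Hle (S n)). lra. }
  assert (H1 : is_lim_seq (fun n => norm (sum_n u n)) (norm lu)).
  { apply (filterlim_comp _ _ _ (sum_n u) norm eventually (locally lu)).
    exact Hu. apply filterlim_norm. }
  assert (H2 : is_lim_seq (sum_n v) lv) by exact Hv.
  pose proof (is_lim_seq_le _ _ _ _ Hs H1 H2) as H. simpl in H.
  exact H.
Qed.

Lemma addsub (z y : C) : y = (z + (y - z))%C.
Proof. ring. Qed.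

Section Gen.
Variable a : nat -> C.
Hypothesis Hab : forall n, Cmod (a n) <= bb n.

Lemma gen_conv (x : C) : @ex_series C_AbsRing C_NormedModule (fun n => (a n * x ^ n)%C).
Proof.
  apply (@ex_series_le C_AbsRing C_CompleteNormedModule _ (fun n => bb n * Cmod x ^ n)).
  - intro n. change (Cmod (a n * x ^ n)%C <= bb n * Cmod x ^ n).
    rewrite Cmod_mult, Cmod_pow. apply Rmult_le_compat_r. apply pow_le, Cmod_ge_0. apply Hab.
  - apply bb_series.
Qed.

Definition gsum (x : C) : C := proj1_sig (constructive_indefinite_description _ (gen_conv x)).

Lemma gsum_correct x : @is_series C_AbsRing C_NormedModule (fun n => (a n * x ^ n)%C) (gsum x).
Proof. unfold gsum. destruct constructive_indefinite_description. simpl. exact i. Qed.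

Definition dterm (z : C) (n : nat) : C := (RtoC (INR n) * a n * z ^ (pred n))%C.

Lemma dconv (z : C) : @ex_series C_AbsRing C_NormedModule (dterm z).
Proof.
  set (R := Cmod z + 1).
  assert (HR : 1 <= R) by (pose proof (Cmod_ge_0 z); unfold R; lra).
  apply (@ex_series_le C_AbsRing C_CompleteNormedModule _ (fun n => bb n * (2 * R) ^ n)).
  - intro n. change (Cmod (dterm z n) <= bb n * (2 * R) ^ n). unfold dterm.
    rewrite !Cmod_mult, Cmod_pow, Cmod_R, Rabs_pos_eq by apply pos_INR.
    rewrite Rpow_mult_distr.
    pose proof (INR_le_2pow n). pose proof (pos_INR n).
    assert (Hz : Cmod z ^ pred n <= R ^ n).
    { apply Rle_trans with (R ^ pred n). apply pow_incr. split. apply Cmod_ge_0. unfold R; lra.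
      apply pow_pred_le; auto. }
    pose proof (Hab n). pose proof (Cmod_ge_0 (a n)).
    assert (0 <= Cmod z ^ pred n) by (apply pow_le, Cmod_ge_0).
    assert (0 <= 2 ^ n) by (apply pow_le; lra).
    apply Rle_trans with ((2 ^ n * bb n) * R ^ n).
    { pose proof (bb_pos n). apply Rmult_le_compat; try nra. }
    right; ring.
  - apply bb_series.
Qed.

Definition gder (z : C) : C := proj1_sig (constructive_indefinite_description _ (dconv z)).

Lemma gder_correct z : @is_series C_AbsRing C_NormedModule (dterm z) (gder z).
Proof. unfold gder. destruct constructive_indefinite_description. simpl. exact i. Qed.


Definition Dn (z h : C) (k : nat) : C :=
  ((z + h) ^ k - z ^ k - RtoC (INR k) * h * z ^ (pred k))%C.

Lemma Dn_rec z h n :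
  Dn z h (S n) = ((z + h) * Dn z h n + RtoC (INR n) * h * h * z ^ (pred n))%C.
Proof.
  unfold Dn. destruct n.
  - simpl. ring.
  - rewrite (S_INR (S n)), RtoC_plus. simpl Nat.pred. simpl Cpow. ring.
Qed.

Lemma Dn_bound z h n : Cmod h <= 1 ->
  Cmod (Dn z h n) <= INR n * INR n * (Cmod h ^ 2) * (Cmod z + 1) ^ n.
Proof.
  intros Hh. set (R := Cmod z + 1).
  assert (HR : 1 <= R) by (pose proof (Cmod_ge_0 z); unfold R; lra).
  induction n.
  - unfold Dn. simpl. replace (1 - 1 - RtoC 0 * h * 1)%C with (RtoC 0) by ring.
    rewrite Cmod_0. lra.
  - rewrite Dn_rec. eapply Rle_trans. apply Cmod_triangle.
    rewrite !Cmod_mult, Cmod_pow, Cmod_R, Rabs_pos_eq by apply pos_INR.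
    assert (Hzh : Cmod (z + h) <= R).
    { eapply Rle_trans. apply Cmod_triangle. unfold R; lra. }
    assert (Hp : Cmod z ^ pred n <= R ^ n).
    { apply Rle_trans with (R ^ pred n). apply pow_incr. split. apply Cmod_ge_0. unfold R; lra.
      apply pow_pred_le; auto. }
    pose proof (pos_INR n) as Hn.
    assert (HRn : 1 <= R ^ n) by (apply pow_R1_Rle; auto).
    pose proof (Cmod_ge_0 h) as H0h. pose proof (Cmod_ge_0 z) as H0z.
    pose proof (Cmod_ge_0 (Dn z h n)) as H0D.
    assert (0 <= Cmod z ^ pred n) by (apply pow_le, Cmod_ge_0).
    set (X := Cmod h ^ 2). assert (HX : 0 <= X) by (unfold X; nra).
    replace (Cmod h * Cmod h) with X by (unfold X; ring).
    rewrite S_INR. simpl (R ^ S n).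
    set (P := R ^ n) in *. set (Q := Cmod z ^ pred n) in *.
    set (Dm := Cmod (Dn z h n)) in *.
    assert (A1 : Cmod (z + h) * Dm <= R * (INR n * INR n * X * P)).
    { apply Rmult_le_compat; auto. apply Cmod_ge_0. }
    assert (A2 : INR n * X * Q <= INR n * X * P).
    { apply Rmult_le_compat_l; auto. nra. }
    assert (A3 : INR n * X * P <= INR n * X * (R * P)).
    { apply Rmult_le_compat_l. nra. nra. }
    assert (A4 : 0 <= X * (R * P)) by (apply Rmult_le_pos; [lra | apply Rmult_le_pos; lra]).
    assert (E : INR n * Cmod h * Cmod h * Q = INR n * X * Q) by (unfold X; ring). rewrite E. assert (A5 : 0 <= INR n * (X * (R * P))) by (apply Rmult_le_pos; lra). lra.
Qed.

Lemma gsum_derive z : @is_derive C_AbsRing C_NormedModule gsum z (gder z).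
Proof.
  split. apply is_linear_scal_l.
  intros x Hx. apply (@is_filter_lim_locally_unique C_AbsRing (AbsRing_NormedModule C_AbsRing)) in Hx. subst x.
  intros eps.
  set (R := Cmod z + 1).
  assert (HR : 1 <= R) by (pose proof (Cmod_ge_0 z); unfold R; lra).
  destruct (bb_series (4 * R)) as [l0 Hl0].
  assert (Hd : 0 < Rmin 1 (eps / (Rabs l0 + 1))).
  { apply Rmin_pos. lra. apply Rdiv_lt_0_compat. apply cond_pos. pose proof (Rabs_pos l0); lra. }
  exists (mkposreal _ Hd). intros y Hy.
  simpl in Hy.
  change (Cmod ((gsum y - gsum z) - (y - z) * gder z)%C <= eps * Cmod (y - z)%C).
  change (Cmod (y - z)%C < Rmin 1 (eps / (Rabs l0 + 1))) in Hy.
  set (h := (y - z)%C) in *.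
  assert (Hy' : @eq C y (z + h)%C) by (unfold h; apply addsub).
  assert (Hh1 : Cmod h <= 1) by (pose proof (Rmin_l 1 (eps / (Rabs l0 + 1))); lra).
  assert (Hser : @is_series C_AbsRing C_NormedModule (fun n => (a n * Dn z h n)%C)
                   ((gsum y - gsum z) - h * gder z)%C).
  { pose proof (is_series_minus _ _ _ _ (gsum_correct y) (gsum_correct z)) as H1.
    pose proof (@is_series_scal C_AbsRing C_NormedModule h _ _ (gder_correct z)) as H2.
    pose proof (is_series_minus _ _ _ _ H1 H2) as H3.
    eapply is_series_ext; [|exact H3].
    intro n. change ((a n * y ^ n + - (a n * z ^ n)) + - (h * dterm z n) = a n * Dn z h n)%C.
    unfold dterm, Dn. rewrite Hy'. ring. }
  assert (Hv : is_series (fun n => Cmod h ^ 2 * (bb n * (4 * R) ^ n)) (Cmod h ^ 2 * l0)).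
  { apply (@is_series_scal R_AbsRing R_NormedModule (Cmod h ^ 2) _ _ Hl0). }
  assert (Hb := series_norm_le _ _ _ _ Hser Hv).
  assert (Hle : Cmod ((gsum y - gsum z) - h * gder z)%C <= Cmod h ^ 2 * l0).
  { apply Hb. intro n. rewrite Cmod_mult.
    pose proof (Dn_bound z h n Hh1) as HD. fold R in HD.
    pose proof (Hab n). pose proof (bb_pos n). pose proof (Cmod_ge_0 (a n)).
    pose proof (Cmod_ge_0 (Dn z h n)).
    pose proof (INR_le_2pow n). pose proof (pos_INR n).
    assert (Hnn : INR n * INR n <= 4 ^ n).
    { replace 4 with (2 * 2) by ring. rewrite Rpow_mult_distr. nra. }
    assert (0 <= Cmod h ^ 2) by (apply pow_le, Cmod_ge_0).
    assert (1 <= R ^ n) by (apply pow_R1_Rle; auto).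
    rewrite Rpow_mult_distr.
    apply Rle_trans with (bb n * (INR n * INR n * Cmod h ^ 2 * R ^ n)).
    apply Rmult_le_compat; auto.
    apply Rle_trans with (bb n * (4 ^ n * Cmod h ^ 2 * R ^ n)).
    apply Rmult_le_compat_l. lra. apply Rmult_le_compat_r. lra. apply Rmult_le_compat_r; auto.
    right; ring. }
  assert (Hl0le : l0 <= Rabs l0) by apply Rle_abs.
  pose proof (Cmod_ge_0 h).
  pose proof (Rmin_r 1 (eps / (Rabs l0 + 1))) as Hm.
  assert (Hd2 : Cmod h * (Rabs l0 + 1) <= eps).
  { assert (Cmod h <= eps / (Rabs l0 + 1)) by lra.
    pose proof (Rabs_pos l0).
    apply Rmult_le_compat_r with (r := Rabs l0 + 1) in H0; [|lra].
    replace (eps / (Rabs l0 + 1) * (Rabs l0 + 1)) with (pos eps) in H0 by (field; lra). lra. }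
  eapply Rle_trans. exact Hle. simpl (Cmod h ^ 2). rewrite Rmult_1_r.
  pose proof (Rabs_pos l0).
  apply Rle_trans with (Cmod h * (Cmod h * (Rabs l0 + 1))). nra.
  rewrite Rmult_comm. apply Rmult_le_compat_r; auto.
Qed.

End Gen.

Lemma RtoC_opp' (r : R) : RtoC (- r) = (- RtoC r)%C.
Proof. apply injective_projections; simpl; ring. Qed.

Lemma Cpow_mul (u v : C) n : ((u * v) ^ n = u ^ n * v ^ n)%C.
Proof. induction n; simpl. ring. rewrite IHn. ring. Qed.

Lemma phi_neq0 : phi <> 0.
Proof. pose proof phi_pos; lra. Qed.

Lemma Fib_C n :
  (RtoC (Fib n) * (RtoC phi + / RtoC phi) = (RtoC phi) ^ n - (- / RtoC phi) ^ n)%C.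
Proof.
  pose proof phi_plus_inv_pos. pose proof phi_pos.
  assert (E : Fib n * (phi + / phi) = phi ^ n + - ((- / phi) ^ n)).
  { unfold Fib. field. split; nra. }
  rewrite <- (RtoC_inv phi) by lra.
  rewrite <- RtoC_opp', <- !RtoC_pow, <- RtoC_plus, <- RtoC_mult, E.
  rewrite RtoC_plus, RtoC_opp'. reflexivity.
Qed.

Lemma T_id (a : nat -> C) (k x : C) n :
  (a n * (k * (RtoC phi * x)) ^ n - a n * (k * (- x / RtoC phi)) ^ n
   = a n * (RtoC (Fib n) * (RtoC phi + / RtoC phi)) * (k * x) ^ n)%C.
Proof.
  rewrite Fib_C.
  replace (k * (RtoC phi * x))%C with (RtoC phi * (k * x))%C by ring.
  replace (k * (- x / RtoC phi))%C with ((- / RtoC phi) * (k * x))%C by (unfold Cdiv; ring).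
  rewrite !Cpow_mul. ring.
Qed.

Lemma PP_neq0 : (RtoC phi + / RtoC phi)%C <> RtoC 0.
Proof.
  pose proof phi_plus_inv_pos. pose proof phi_pos.
  rewrite <- (RtoC_inv phi) by lra. rewrite <- RtoC_plus.
  intro H'. apply (f_equal fst) in H'. simpl in H'. lra.
Qed.

Lemma DF_gen (c : nat -> R) (Hc : forall n, Cmod (RtoC (c n)) <= bb n) (w k x : C) :
  (forall m, (RtoC (c (S m) * Fib (S m)) * (k * x) ^ m = RtoC (c m) * w ^ m)%C) ->
  x <> RtoC 0 ->
  DF (fun y => gsum (fun n => RtoC (c n)) Hc (k * y)%C) x
  = (k * gsum (fun n => RtoC (c n)) Hc w)%C.
Proof.
  intros Hm Hx. unfold DF.
  set (a := fun n => RtoC (c n)).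
  set (S1 := gsum a Hc (k * (RtoC phi * x))%C).
  set (S2 := gsum a Hc (k * (- x / RtoC phi))%C).
  set (Sw := gsum a Hc w).
  set (P := RtoC phi).
  set (C0 := ((P + / P) * (k * x))%C).
  set (T := fun n => (a n * (k * (P * x)) ^ n - a n * (k * (- x / P)) ^ n)%C).
  assert (H1 : @is_series C_AbsRing C_NormedModule T (S1 - S2)%C).
  { pose proof (is_series_minus _ _ _ _ (gsum_correct a Hc (k * (RtoC phi * x))%C)
                  (gsum_correct a Hc (k * (- x / RtoC phi))%C)) as H.
    exact H. }
  assert (H2 : @is_series C_AbsRing C_NormedModule (fun m => T (S m)) (S1 - S2)%C).
  { apply is_series_incr_1.
    assert (E0 : (S1 - S2 = (S1 - S2) + T 0%nat)%C).
    { unfold T. change (S1 - S2 = (S1 - S2) + (a 0%nat * 1 - a 0%nat * 1))%C. ring. }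
    rewrite E0 in H1. exact H1. }
  assert (H3 : @is_series C_AbsRing C_NormedModule (fun m => C0 * (a m * w ^ m))%C (C0 * Sw)%C).
  { apply (@is_series_scal C_AbsRing C_NormedModule C0 _ _ (gsum_correct a Hc w)). }
  assert (H4 : @is_series C_AbsRing C_NormedModule (fun m => T (S m)) (C0 * Sw)%C).
  { eapply is_series_ext; [|exact H3]. intro m. simpl.
    unfold T. rewrite T_id. unfold C0, a. rewrite <- Hm.
    rewrite RtoC_mult. simpl Cpow. fold P. ring. }
  assert (E : (S1 - S2)%C = (C0 * Sw)%C).
  { eapply (@filterlim_locally_unique nat C_AbsRing C_NormedModule eventually _).
    exact H2. exact H4. }
  fold P. fold S1 S2. rewrite E. unfold C0.
  pose proof PP_neq0 as HP. fold P in HP.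
  pose proof phi_pos as Hphi.
  field. split; [|split; auto].
  - unfold P; intro H'; apply (f_equal fst) in H'; simpl in H'; lra.
  - unfold P; intro H'; apply (f_equal fst) in H'; simpl in H'; nra.
Qed.

Lemma Fib_S_neq0 m : Fib (S m) <> 0.
Proof. pose proof (Fib_S_ge1 m); lra. Qed.

Lemma Fibfact_neq0 m : Fibfact m <> 0.
Proof. pose proof (Fibfact_pos m); lra. Qed.

Lemma ce_bound n : Cmod (RtoC (/ Fibfact n)) <= bb n.
Proof. rewrite Cmod_R, Rabs_pos_eq. unfold bb; lra. apply Rlt_le, bb_pos. Qed.

Lemma cE_bound n : Cmod (RtoC ((-1) ^ (n * (n - 1) / 2) / Fibfact n)) <= bb n.
Proof.
  rewrite Cmod_R. unfold Rdiv. rewrite Rabs_mult, pow_1_abs, Rmult_1_l.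
  rewrite Rabs_pos_eq. unfold bb; lra. apply Rlt_le, bb_pos.
Qed.

Lemma sign_step m : (S m * (S m - 1) / 2 = m * (m - 1) / 2 + m)%nat.
Proof.
  replace (S m * (S m - 1))%nat with (m * (m - 1) + m * 2)%nat by (destruct m; simpl; nia).
  apply Nat.div_add. lia.
Qed.

Theorem mainTheorem8 :
  exists eF EF : C -> C,
    (forall x : C,
        @is_series C_AbsRing C_NormedModule (fun n => (eF_coef n * x ^ n)%C) (eF x) /\
        @is_series C_AbsRing C_NormedModule (fun n => (EF_coef n * x ^ n)%C) (EF x)) /\
    (forall z : C,
        @ex_derive C_AbsRing C_NormedModule eF z /\
        @ex_derive C_AbsRing C_NormedModule EF z) /\
    (forall k x : C, x <> RtoC 0 ->
        DF (fun y => eF (k * y)%C) x = (k * eF (k * x))%C /\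
        DF (fun y => EF (k * y)%C) x = (k * EF (- k * x))%C).
Proof.
  exists (gsum (fun n => RtoC (/ Fibfact n)) ce_bound).
  exists (gsum (fun n => RtoC ((-1) ^ (n * (n - 1) / 2) / Fibfact n)) cE_bound).
  split; [|split].
  - intro x. split; apply gsum_correct.
  - intro z. split; eexists; apply gsum_derive.
  - intros k x Hx. split.
    + apply DF_gen; auto. intro m. f_equal. f_equal. cbn [Fibfact].
      pose proof (Fib_S_neq0 m). pose proof (Fibfact_neq0 m). field. auto.
    + apply DF_gen; auto. intro m.
      rewrite sign_step, pow_add. cbn [Fibfact].
      pose proof (Fib_S_neq0 m). pose proof (Fibfact_neq0 m).
      replace ((-1) ^ (m * (m - 1) / 2) * (-1) ^ m / (Fibfact m * Fib (S m)) * Fib (S m))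
        with ((-1) ^ (m * (m - 1) / 2) / Fibfact m * (-1) ^ m) by (field; auto).
      rewrite RtoC_mult, RtoC_pow.
      replace (- k * x)%C with (RtoC (-1) * (k * x))%C by (apply injective_projections; simpl; ring).
      rewrite !Cpow_mul. ring.
Qed.
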